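(* Let $\overline{F}(x) = 1$ for $x < 2$ and $\overline{F}(x) = 2^{-\lfloor \log_2 x \rfloor}$ for $x \geq 2$, and let $\theta \in (0,1)$. Then $\theta\, \overline{F}(x) \leq \overline{F}(x/\theta)$ holds for all $x \geq 0$ if and only if $\theta \in \{2^{-k} : k \in \{1,2,3,\dots\}\}$. *)

(* Defs.v *)
From Stdlib Require Import Reals.
Open Scope R_scope.

Definition log2 (x : R) : R := ln x / ln 2.

(* Int_part r is the floor of r (largest integer <= r). *)
Definition Fbar (x : R) : R :=
  if Rlt_dec x 2 then 1 else powerRZ 2 (- Int_part (log2 x))%Z.

(* Main.v *)
Require Import Defs.
From Stdlib Require Import Reals Lra Lia ZArith.
Open Scope R_scope.

Definition P (r : R) := Rpower 2 r.

Lemma ln2_pos : 0 < ln 2.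
Proof. pose proof ln_lt_2; lra. Qed.

Lemma P_log2 y : 0 < y -> P (log2 y) = y.
Proof.
  intro Hy. unfold P, Rpower, log2. pose proof ln2_pos.
  replace (ln y / ln 2 * ln 2) with (ln y) by (field; lra).
  now apply exp_ln.
Qed.

Lemma log2_P a : log2 (P a) = a.
Proof. unfold log2, P. rewrite ln_Rpower. pose proof ln2_pos. field; lra. Qed.

Lemma P_lt a b : a < b -> P a < P b.
Proof. intros; apply Rpower_lt; lra. Qed.

Lemma P_le a b : a <= b -> P a <= P b.
Proof. intros; apply Rle_Rpower; lra. Qed.

Lemma P_pos a : 0 < P a.
Proof. unfold P, Rpower; apply exp_pos. Qed.

Lemma log2_lt x y : 0 < x -> x < y -> log2 x < log2 y.
Proof.
  intros. unfold log2. pose proof ln2_pos. apply Rmult_lt_compat_r.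
  now apply Rinv_0_lt_compat. apply ln_increasing; lra.
Qed.

Lemma log2_le_inv x y : 0 < x -> 0 < y -> log2 x <= log2 y -> x <= y.
Proof.
  intros. rewrite <- (P_log2 x), <- (P_log2 y) by lra. now apply P_le.
Qed.

Lemma log2_mult x y : 0 < x -> 0 < y -> log2 (x * y) = log2 x + log2 y.
Proof. intros. unfold log2. rewrite ln_mult by lra. pose proof ln2_pos. field; lra. Qed.

Lemma log2_inv x : 0 < x -> log2 (/ x) = - log2 x.
Proof. intros. unfold log2. rewrite ln_Rinv by lra. pose proof ln2_pos. field; lra. Qed.

Lemma IP_spec r z : IZR z <= r < IZR z + 1 -> Int_part r = z.
Proof.
  intros [H1 H2]. unfold Int_part.
  assert (z + 1 = up r)%Z.
  { apply tech_up; rewrite plus_IZR; lra. }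
  lia.
Qed.

Lemma IP_bounds r : IZR (Int_part r) <= r < IZR (Int_part r) + 1.
Proof. pose proof (base_Int_part r). lra. Qed.

Lemma Fbar_ge2 y : 2 <= y -> Fbar y = P (- IZR (Int_part (log2 y))).
Proof.
  intros. unfold Fbar. destruct (Rlt_dec y 2); [lra|].
  rewrite powerRZ_Rpower by lra. now rewrite opp_IZR.
Qed.

Lemma P_1 : P 1 = 2.
Proof. unfold P. apply Rpower_1. lra. Qed.

Lemma log2_ge1 y : 0 < y -> 1 <= log2 y -> 2 <= y.
Proof. intros. rewrite <- (P_log2 y) by lra. rewrite <- P_1. now apply P_le. Qed.

Lemma log2_ge1' y : 2 <= y -> 1 <= log2 y.
Proof.
  intros. rewrite <- (log2_P 1), P_1. destruct (Req_dec y 2). subst; lra.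
  left; apply log2_lt; lra.
Qed.

Theorem lemma14 (theta : R) (Htheta : 0 < theta < 1) :
  (forall x : R, 0 <= x -> theta * Fbar x <= Fbar (x / theta)) <->
  (exists k : nat, (1 <= k)%nat /\ theta = / 2 ^ k).
Proof.
  split.
  - intro H.
    set (n := Int_part (log2 theta)).
    pose proof (IP_bounds (log2 theta)) as Hb. fold n in Hb.
    assert (Hneg : log2 theta < 0).
    { rewrite <- (log2_P 0). unfold P. rewrite Rpower_O by lra. apply log2_lt; lra. }
    assert (Hn : (n <= -1)%Z).
    { assert (IZR n < 0) by lra. apply lt_IZR in H0. lia. }
    set (x := P (1 - IZR n) * theta).
    assert (Hx0 : 0 < x) by (unfold x; pose proof (P_pos (1 - IZR n)); nra).
    assert (Hlx : log2 x = 1 - IZR n + log2 theta).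
    { unfold x. rewrite log2_mult, log2_P; [lra| apply P_pos | lra]. }
    assert (Hx2 : 2 <= x) by (apply log2_ge1; lra).
    assert (HFx : Fbar x = P (-1)).
    { rewrite Fbar_ge2 by lra. f_equal.
      rewrite (IP_spec (log2 x) 1); [reflexivity|]. rewrite Hlx. lra. }
    assert (Hxt : x / theta = P (1 - IZR n)).
    { unfold x. field. lra. }
    assert (HFxt : Fbar (x / theta) = P (IZR n - 1)).
    { rewrite Hxt. rewrite Fbar_ge2.
      2:{ rewrite <- P_1. apply P_le. assert (IZR n <= -1) by (apply IZR_le; lia). lra. }
      rewrite log2_P. rewrite (IP_spec _ (1 - n)).
      rewrite minus_IZR. f_equal. lra.
      rewrite minus_IZR. lra. }
    specialize (H x (Rlt_le _ _ Hx0)). rewrite HFx, HFxt in H.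
    replace (IZR n - 1) with (IZR n + -1) in H by ring.
    unfold P in H. rewrite Rpower_plus in H. fold (P (-1)) in H. fold (P (IZR n)) in H.
    pose proof (P_pos (-1)).
    assert (Ht : theta <= P (IZR n)) by nra.
    assert (Heq : theta = P (IZR n)).
    { apply Rle_antisym; auto. rewrite <- (P_log2 theta) by lra. now apply P_le. }
    exists (Z.to_nat (- n)). split; [lia|].
    rewrite Heq. unfold P. rewrite <- Rpower_pow by lra.
    rewrite <- Rpower_Ropp. f_equal. rewrite INR_IZR_INZ, Z2Nat.id by lia.
    rewrite opp_IZR; ring.
  - intros [k [Hk Ht]] x Hx.
    assert (HtP : theta = P (- IZR (Z.of_nat k))).
    { rewrite Ht. unfold P. rewrite Rpower_Ropp, <- INR_IZR_INZ, Rpower_pow by lra. reflexivity. }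
    assert (Hlt : log2 theta = - IZR (Z.of_nat k)) by (rewrite HtP; apply log2_P).
    destruct (Rle_lt_dec 2 x) as [Hx2 | Hx2].
    + assert (Hl : log2 (x / theta) = log2 x + IZR (Z.of_nat k)).
      { unfold Rdiv. rewrite log2_mult, log2_inv; try apply Rinv_0_lt_compat; lra. }
      rewrite (Fbar_ge2 x Hx2).
      assert (Hxt2 : 2 <= x / theta).
      { apply log2_ge1. apply Rdiv_lt_0_compat; lra.
        pose proof (log2_ge1' x Hx2). assert (0 <= IZR (Z.of_nat k)) by (apply IZR_le; lia). lra. }
      rewrite (Fbar_ge2 _ Hxt2).
      rewrite (IP_spec (log2 (x / theta)) (Int_part (log2 x) + Z.of_nat k)).
      2:{ rewrite Hl, plus_IZR. pose proof (IP_bounds (log2 x)). lra. }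
      rewrite HtP. unfold P. rewrite <- Rpower_plus. right. f_equal. rewrite plus_IZR. ring.
    + assert (HF : Fbar x = 1) by (unfold Fbar; destruct (Rlt_dec x 2); lra).
      rewrite HF, Rmult_1_r.
      unfold Fbar at 1. destruct (Rlt_dec (x / theta) 2) as [_|Hn]; [lra|].
      apply Rnot_lt_le in Hn.
      destruct (Req_dec x 0) as [H0|H0].
      { subst. unfold Rdiv in Hn. lra. }
      assert (Hx0 : 0 < x) by (destruct Hx; [lra| congruence]).
      assert (Hl : log2 (x / theta) = log2 x + IZR (Z.of_nat k)).
      { unfold Rdiv. rewrite log2_mult, log2_inv; try apply Rinv_0_lt_compat; lra. }
      assert (Hlx : log2 x < 1).
      { rewrite <- (log2_P 1), P_1. apply log2_lt; lra. }
      pose proof (IP_bounds (log2 (x / theta))) as Hb.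
      assert (Hle : (Int_part (log2 (x / theta)) <= Z.of_nat k)%Z).
      { assert (IZR (Int_part (log2 (x / theta))) < IZR (Z.of_nat k + 1)) by (rewrite plus_IZR; lra).
        apply lt_IZR in H. lia. }
      rewrite powerRZ_Rpower by lra. fold (P (IZR (- Int_part (log2 (x / theta))))).
      apply Rle_trans with (P (- IZR (Z.of_nat k))); [right; exact HtP|].
      apply P_le. rewrite opp_IZR. apply IZR_le in Hle. lra.
Qed.
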